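(* Let $V$ be a quasi-regular mixed lattice vector space and $W$ a subset of $V$. Then $W$ is a regular quasi-ideal if and only if $W=A_{sp}-A_{sp}$ for some ideal $A$ of $V$.
   Context: A mixed lattice vector space is a real vector space $V$ with two partial orderings $\le$ (initial) and $\preceq$ (specific), each compatible with the vector space structure, such that for all $x,y$ the mixed lower envelope $x\curlywedge y=\max\{w: w\preceq x,\ w\le y\}$ and mixed upper envelope $x\curlyvee y=\min\{w: x\preceq w,\ y\le w\}$ exist (max/min with respect to $\le$). $V_p=\{x:0\le x\}$, $V_{sp}=\{x:0\preceq x\}$, $E_p=E\cap V_p$, $E_{sp}=E\cap V_{sp}$. $V$ is quasi-regular if $V_{sp}$ is closed under $\curlywedge,\curlyvee$. A mixed lattice subspace is a linear subspace closed under $\curlywedge,\curlyvee$. A subspace $S$ is regular if $S=S_{sp}-S_{sp}$. An ideal is a mixed lattice subspace that is $(\le)$-order convex ($x\le z\le y$ with $x,y$ in it implies $z$ in it). A quasi-ideal is a mixed lattice subspace $A$ such that $y\in A$ and $0\preceq x\le y$ imply $x\in A$. *)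

(* Defs.v *)
From HB Require Import structures.
From mathcomp Require Import all_boot all_order all_algebra.
From mathcomp Require Import reals.
Set Implicit Arguments. Unset Strict Implicit. Unset Printing Implicit Defensive.
Import Order.TTheory GRing.Theory Num.Theory.
Local Open Scope ring_scope.

Definition compatible_order (R : realType) (V : lmodType R) (le : V -> V -> Prop) :=
  [/\ (forall x, le x x),
      (forall x y, le x y -> le y x -> x = y),
      (forall x y z, le x y -> le y z -> le x z),
      (forall x y z, le x y -> le (x + z) (y + z))
    & (forall (a : R) x y, 0 <= a -> le x y -> le (a *: x) (a *: y))].

Definition is_mixed_lower (R : realType) (V : lmodType R)
  (le sle : V -> V -> Prop) (x y w : V) :=
  [/\ sle w x, le w y & forall w', sle w' x -> le w' y -> le w' w].

Definition is_mixed_upper (R : realType) (V : lmodType R)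
  (le sle : V -> V -> Prop) (x y w : V) :=
  [/\ sle x w, le y w & forall w', sle x w' -> le y w' -> le w w'].

(* A mixed lattice vector space structure on V: the initial order [ml_le],
   the specific order [ml_sle], and the (unique, by antisymmetry) envelopes. *)
Record mixedLatticeVS (R : realType) (V : lmodType R) := MixedLatticeVS {
  ml_le : V -> V -> Prop;
  ml_sle : V -> V -> Prop;
  ml_low : V -> V -> V;
  ml_up : V -> V -> V;
  ml_le_compat : compatible_order ml_le;
  ml_sle_compat : compatible_order ml_sle;
  ml_lowP : forall x y, is_mixed_lower ml_le ml_sle x y (ml_low x y);
  ml_upP : forall x y, is_mixed_upper ml_le ml_sle x y (ml_up x y)
}.

Section Defs.
Variables (R : realType) (V : lmodType R) (M : mixedLatticeVS V).
Local Notation le := (ml_le M).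
Local Notation sle := (ml_sle M).
Local Notation low := (ml_low M).
Local Notation up := (ml_up M).

Definition Vsp (x : V) : Prop := sle 0 x.

Definition quasi_regular : Prop :=
  forall x y, Vsp x -> Vsp y -> Vsp (low x y) /\ Vsp (up x y).

Definition linear_subspace (S : V -> Prop) : Prop :=
  S 0 /\ forall (a : R) x y, S x -> S y -> S (a *: x + y).

Definition mixed_lattice_subspace (S : V -> Prop) : Prop :=
  linear_subspace S /\ forall x y, S x -> S y -> S (low x y) /\ S (up x y).

Definition sp_part (E : V -> Prop) (x : V) : Prop := E x /\ Vsp x.

Definition sp_diff (E : V -> Prop) (x : V) : Prop :=
  exists a b, sp_part E a /\ sp_part E b /\ x = a - b.

Definition regular (S : V -> Prop) : Prop :=
  linear_subspace S /\ forall x, S x <-> sp_diff S x.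

Definition ideal (A : V -> Prop) : Prop :=
  mixed_lattice_subspace A /\
  forall x y z, A x -> A y -> le x z -> le z y -> A z.

Definition quasi_ideal (A : V -> Prop) : Prop :=
  mixed_lattice_subspace A /\
  forall x y, A y -> sle 0 x -> le x y -> A x.

End Defs.

(* Main.v *)
Require Import Defs.
From mathcomp Require Import all_boot all_order all_algebra.
From mathcomp Require Import reals.
From HB Require Import structures.
From mathcomp Require Import reals.
Set Implicit Arguments. Unset Strict Implicit. Unset Printing Implicit Defensive.
Import Order.TTheory GRing.Theory Num.Theory.
Local Open Scope ring_scope.

Section H.
Context {R : realType} {V : lmodType R}.
Implicit Types (le : V -> V -> Prop).

Lemma co_refl le : compatible_order le -> forall x, le x x.
Proof. by case. Qed.
Lemma co_anti le : compatible_order le -> forall x y, le x y -> le y x -> x = y.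
Proof. by case. Qed.
Lemma co_trans le : compatible_order le -> forall x y z, le x y -> le y z -> le x z.
Proof. by case. Qed.
Lemma co_add le : compatible_order le -> forall x y z, le x y -> le (x + z) (y + z).
Proof. by case. Qed.
Lemma co_scale le : compatible_order le -> forall (a : R) x y, 0 <= a -> le x y -> le (a *: x) (a *: y).
Proof. by case. Qed.
Lemma co_addl le : compatible_order le -> forall x y z, le x y -> le (z + x) (z + y).
Proof. by move=> H x y z /(co_add H z); rewrite ![_ + z]addrC. Qed.
Lemma co_add2 le : compatible_order le -> forall a b c d, le a b -> le c d -> le (a + c) (b + d).
Proof. move=> H a b c d h1 h2; apply: (co_trans H (co_add H c h1)); exact: co_addl. Qed.
Lemma co_opp le : compatible_order le -> forall x y, le x y -> le (- y) (- x).
Proof.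
move=> H x y /(co_add H (- x - y)).
rewrite addrA subrr add0r (addrC (-x)) addrA subrr add0r //.
Qed.
Lemma co_scaleN le : compatible_order le -> forall (a : R) x y, a <= 0 -> le x y -> le (a *: y) (a *: x).
Proof.
move=> H a x y ha /(co_opp H) h.
have := co_scale H (a := - a) _ h; rewrite oppr_ge0 => /(_ ha).
by rewrite !scaleNr !scalerN !opprK.
Qed.
Lemma co_subr le : compatible_order le -> forall x p, le 0 p -> le (x - p) x.
Proof.
move=> H x p /(co_opp H); rewrite oppr0 => /(co_addl H x); by rewrite addr0.
Qed.
Lemma co_addr le : compatible_order le -> forall x p, le 0 p -> le x (x + p).
Proof. move=> H x p /(co_addl H x); by rewrite addr0. Qed.
Lemma co_sub0 le : compatible_order le -> forall x y, le x y -> le 0 (y - x).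
Proof. move=> H x y /(co_add H (- x)); by rewrite subrr. Qed.
Lemma co_from0 le : compatible_order le -> forall x y, le 0 (y - x) -> le x y.
Proof. move=> H x y /(co_add H x); by rewrite add0r subrK. Qed.

Variable M : mixedLatticeVS V.
Local Notation le := (ml_le M).
Local Notation sle := (ml_sle M).
Local Notation low := (ml_low M).
Local Notation up := (ml_up M).
Let L := ml_le_compat M.
Let S := ml_sle_compat M.

Lemma sle_le (HQ : quasi_regular M) x y : sle x y -> le x y.
Proof.
move=> /(co_sub0 S) h; apply: (co_from0 L).
have [h1 _] := HQ 0 (y - x) (co_refl S 0) h.
have [l1 l2 _] := ml_lowP M 0 (y - x).
by have <- := co_anti S l1 h1.
Qed.

Lemma low_shift1 x y z : le (low x y + z) (low (x + z) (y + z)).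
Proof.
have [l1 l2 _] := ml_lowP M x y.
have [_ _ l3] := ml_lowP M (x + z) (y + z).
by apply: l3; [apply: (co_add S) | apply: (co_add L)].
Qed.

Lemma low_shift x y z : low (x + z) (y + z) = low x y + z.
Proof.
apply: (co_anti L); last exact: low_shift1.
have := low_shift1 (x + z) (y + z) (- z).
rewrite !addrK => /(co_add L z); by rewrite subrK.
Qed.

Lemma up_shift1 x y z : le (up (x + z) (y + z)) (up x y + z).
Proof.
have [l1 l2 _] := ml_upP M x y.
have [_ _ l3] := ml_upP M (x + z) (y + z).
by apply: l3; [apply: (co_add S) | apply: (co_add L)].
Qed.

Lemma up_shift x y z : up (x + z) (y + z) = up x y + z.
Proof.
apply: (co_anti L); first exact: up_shift1.
have := up_shift1 (x + z) (y + z) (- z).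
rewrite !addrK => /(co_add L z); by rewrite subrK.
Qed.


Lemma ls_add (P : V -> Prop) : linear_subspace P -> forall x y, P x -> P y -> P (x + y).
Proof. by case=> _ h x y hx hy; have := h 1 x y hx hy; rewrite scale1r. Qed.
Lemma ls_sub (P : V -> Prop) : linear_subspace P -> forall x y, P x -> P y -> P (x - y).
Proof. by case=> _ h x y hx hy; have := h (-1) y x hy hx; rewrite scaleN1r addrC. Qed.

Lemma sp_comb (A : V -> Prop) (a : R) p r : linear_subspace A -> 0 <= a ->
  sp_part M A p -> sp_part M A r -> sp_part M A (a *: p + r).
Proof.
move=> [_ hA] ha [Ap sp] [Ar sr]; split; first exact: hA.
rewrite /Vsp -(addr0 0); apply: (co_add2 S) => //.
by rewrite -(scaler0 _ a); apply: (co_scale S).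
Qed.

Lemma dir2 (HQ : quasi_regular M) (W A : V -> Prop) :
  ideal M A -> (forall x, W x <-> sp_diff M A x) -> quasi_ideal M W /\ regular M W.
Proof.
move=> [[lA cA] iA] HW.
have A0 : sp_part M A 0 by split; [case: lA | exact: co_refl S 0].
have lW : linear_subspace W.
  split; first by apply/HW; exists 0, 0; rewrite subr0.
  move=> a x y /HW [p [q [Hp [Hq ->]]]] /HW [r [s [Hr [Hs ->]]]]; apply/HW.
  have [ha|ha] := lerP 0 a.
    exists (a *: p + r), (a *: q + s); split; [exact: sp_comb|split; first exact: sp_comb].
    by rewrite scalerBr addrACA opprD.
  exists ((- a) *: q + r), ((- a) *: p + s).
  split; [apply: sp_comb => //; rewrite oppr_ge0 ltW //|split].
    apply: sp_comb => //; rewrite oppr_ge0 ltW //.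
  rewrite scalerBr addrACA opprD !scaleNr opprK addrACA [RHS]addrACA; congr (_ + _); exact: addrC.
have Wsp : forall p, sp_part M A p -> sp_part M W p.
  move=> p hp; split; last by case: hp.
  by apply/HW; exists p, 0; rewrite subr0.
split; last first.
  split => // x; split.
    move=> /HW [p [q [Hp [Hq ->]]]]; exists p, q; split; [exact: Wsp | split; [exact: Wsp | by []]].
  by move=> [p [q [[Hp _] [[Hq _] ->]]]]; apply: ls_sub.
split.
  split => // x y /HW [p [q [Hp [Hq ->]]]] /HW [r [s [Hr [Hs ->]]]].
  have Hc : sp_part M A (q + s) by rewrite -[q]scale1r; apply: sp_comb.
  have H1 : sp_part M A (p + s) by rewrite -[p]scale1r; apply: sp_comb.
  have H2 : sp_part M A (r + q) by rewrite -[r]scale1r; apply: sp_comb.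
  have E1 : p - q = (p + s) - (q + s) by rewrite opprD addrACA subrr addr0.
  have E2 : r - s = (r + q) - (q + s) by rewrite opprD addrA addrK.
  rewrite E1 E2 !low_shift !up_shift.
  case: H1 => [A1 S1]; case: H2 => [A2 S2]; have [c1 c2] := cA _ _ A1 A2.
  have [v1 v2] := HQ _ _ S1 S2.
  split; apply/HW; [exists (low (p + s) (r + q)) | exists (up (p + s) (r + q))];
     exists (q + s); split => //.
move=> x y /HW [p [q [[Ap sp] [[Aq sq] ->]]]] sx lx.
apply/HW; exists x, 0; rewrite subr0; split => //; split => //.
apply: (iA 0 p) => //; [by case: lA | exact: sle_le | ].
apply: (co_trans L lx); apply: (co_subr L); exact: sle_le.
Qed.


Lemma dir1 (HQ : quasi_regular M) (W : V -> Prop) :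
  quasi_ideal M W -> regular M W ->
  exists A : V -> Prop, ideal M A /\ (forall x, W x <-> sp_diff M A x).
Proof.
move=> [[lW cW] qW] [_ rW].
pose A x := exists a b, [/\ W a, W b, le a x & le x b].
have Wadd := ls_add lW; have Wsub := ls_sub lW.
have W0 : W 0 by case: lW.
have decomp : forall u, W u -> exists p q, [/\ W p, W q, le 0 q, sle 0 p & u = p - q].
  move=> u /rW [p [q [[Wp sp] [[Wq sq] ->]]]]; exists p, q; split => //; exact: sle_le.
exists A; split; last first.
  move=> x; split.
    move=> /rW [p [q [[Wp sp] [[Wq sq] ->]]]]; exists p, q; split; last split => //.
      by split => //; exists p, p; split => //; apply: (co_refl L).
    by split => //; exists q, q; split => //; apply: (co_refl L).
  move=> [p [q [[[a [b [_ Wb _ hb]]] sp] [[[c [d [_ Wd _ hd]]] sq] ->]]]].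
  by apply: Wsub; [apply: (qW p b) | apply: (qW q d)] => //; apply: sle_le.
split; last first.
  move=> x y z [a [b [Wa _ ha _]]] [c [d [_ Wd _ hd]]] h1 h2.
  by exists a, d; split => //; [apply: (co_trans L ha) | apply: (co_trans L h2)].
split.
  split; first by exists 0, 0; split => //; apply: (co_refl L).
  move=> al x y [a [b [Wa Wb ha hb]]] [c [d [Wc Wd hc hd]]].
  have [hal|hal] := lerP 0 al.
    exists (al *: a + c), (al *: b + d); case: lW => _ lW'; split; try exact: lW'.
      by apply: (co_add2 L) => //; apply: (co_scale L).
    by apply: (co_add2 L) => //; apply: (co_scale L).
  exists (al *: b + c), (al *: a + d); case: lW => _ lW'; split; try exact: lW'.
    by apply: (co_add2 L) => //; apply: (co_scaleN L) => //; apply: ltW.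
  by apply: (co_add2 L) => //; apply: (co_scaleN L) => //; apply: ltW.
move=> x y [a [b [Wa Wb ha hb]]] [c [d [Wc Wd hc hd]]].
have [_ hl1 hl2] := ml_lowP M x y.
have [_ hu1 hu2] := ml_upP M x y.
split.
  have [p [q [Wp Wq q0 p0 E]]] := decomp _ (Wsub _ _ Wb Wc).
  have h1 : le (x - y) p.
    apply: (co_trans L (co_add2 L hb (co_opp L hc))); rewrite E; exact: (co_subr L).
  have xp : le (x - p) y.
    have := co_add L (y - p) h1; by rewrite addrA addrNK (addrC p) addrNK.
  exists (a - p), d; split; [exact: Wsub | exact: Wd | | ].
    apply: (co_trans L (co_add L (- p) ha)); apply: hl2 => //; exact: (co_subr S).
  exact: (co_trans L hl1).
have [p [q [Wp Wq q0 p0 E]]] := decomp _ (Wsub _ _ Wd Wa).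
have h1 : le (y - x) p.
  apply: (co_trans L (co_add2 L hd (co_opp L ha))); rewrite E; exact: (co_subr L).
have yp : le y (x + p).
  have := co_add L x h1; by rewrite addrNK addrC.
exists c, (b + p); split; [exact: Wc | exact: Wadd | exact: (co_trans L hc) | ].
apply: (co_trans L (hu2 _ (co_addr S x p0) yp)); exact: (co_add L).
Qed.

End H.

Theorem theorem4p15 (R : realType) (V : lmodType R) (M : mixedLatticeVS V)
  (HQ : quasi_regular M) (W : V -> Prop) :
  (quasi_ideal M W /\ regular M W) <->
  exists A : V -> Prop, ideal M A /\ (forall x, W x <-> sp_diff M A x).
Proof.
split.
  by move=> [h1 h2]; apply: dir1.
by move=> [A [hA hW]]; apply: (dir2 HQ hA hW).
Qed.
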